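(* Let $B_{\mathrm{lbl}}(x,y)=\sum_{i,j\ge0}2^{ij}\frac{x^iy^j}{i!\,j!}$, the exponential generating function for labelled bicoloured graphs, and let $T_{\mathrm{lbl}}(x,y)=\sum_{i,j\ge0}\tau_{i,j}\frac{x^iy^j}{i!\,j!}$, where $\tau_{i,j}$ is the number of edge sets $E\subseteq V_1\times V_2$ with $V_1=\{u_1,\dots,u_i\}$, $V_2=\{w_1,\dots,w_j\}$ fixed labelled sets such that $(V_1,V_2,E)$ is a tangle. Then \[T_{\mathrm{lbl}}(x,y)=e^{-x}+e^{-y}-1-B_{\mathrm{lbl}}(x,y)^{-1}.\]
   Context: A bicoloured graph is a triple $G=(V_1,V_2,E)$ with $V_1,V_2$ disjoint finite sets (ordered colour classes) and $E\subseteq V_1\times V_2$. For a vertex $u$ let $N(u)$ be its set of neighbours. $G$ is called a tangle if $|V_1|\ge2$, $|V_2|\ge2$, the graph on $V_2$ joining $a,b$ whenever neither of $N(a),N(b)$ contains the other is connected, and the graph on $V_1$ defined by the same rule is connected. (Equivalently, viewing $G$ as the poset on $V_1\cup V_2$ with $u<w$ iff $u\in V_1,w\in V_2$, $(u,w)\in E$, the whole poset is a single tangle with top $V_2$ and bottom $V_1$.) *)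

(* Defs.v *)
From mathcomp Require Import all_boot all_order all_algebra.
Set Implicit Arguments. Unset Strict Implicit. Unset Printing Implicit Defensive.
Import GRing.Theory Num.Theory.

Definition nbr1 (i j : nat) (E : {set 'I_i * 'I_j}) (u : 'I_i) : {set 'I_j} :=
  [set w | (u, w) \in E].
Definition nbr2 (i j : nat) (E : {set 'I_i * 'I_j}) (w : 'I_j) : {set 'I_i} :=
  [set u | (u, w) \in E].

Definition incomp (T U : finType) (N : T -> {set U}) : rel T :=
  fun a b => ~~ (N a \subset N b) && ~~ (N b \subset N a).

Definition connectedb (T : finType) (e : rel T) : bool :=
  [forall a, forall b, connect e a b].

Definition is_tangle (i j : nat) (E : {set 'I_i * 'I_j}) : bool :=
  [&& 2 <= i, 2 <= j, connectedb (incomp (nbr2 E)) & connectedb (incomp (nbr1 E))].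

Definition tau (i j : nat) : nat := #|[set E : {set 'I_i * 'I_j} | is_tangle E]|.

Local Open Scope ring_scope.

(* formal power series in x, y over rat: F i j = coefficient of x^i y^j *)
Definition series := nat -> nat -> rat.

Definition smul (F G : series) : series := fun i j =>
  \sum_(a < i.+1) \sum_(b < j.+1) F a b * G (i - a)%N (j - b)%N.

Definition sone : series := fun i j => if (i == 0%N) && (j == 0%N) then 1 else 0.

Definition B_lbl : series := fun i j => (2 ^ (i * j))%:R / (i`! * j`!)%:R.
Definition T_lbl : series := fun i j => (tau i j)%:R / (i`! * j`!)%:R.
Definition exp_negx : series := fun i j => if j == 0%N then (-1) ^+ i / (i`!)%:R else 0.
Definition exp_negy : series := fun i j => if i == 0%N then (-1) ^+ j / (j`!)%:R else 0.

(* Main.v *)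
Require Import Defs.
From mathcomp Require Import all_boot all_order all_algebra.
From mathcomp Require Import ring zify.
Import GRing.Theory Num.Theory.
Set Implicit Arguments. Unset Strict Implicit. Unset Printing Implicit Defensive.

Section IncGen.
Variables (T U : finType) (N : T -> {set U}).
Local Notation R := (incomp N).

Lemma incompC : symmetric R.
Proof. by move=> a b; rewrite /incomp andbC. Qed.

Lemma incomp_irr a b : N a = N b -> R a b = false.
Proof. by move=> e; rewrite /incomp e subxx. Qed.

Lemma connect_pinv (P : T -> bool) x :
  (forall z z', connect R x z -> R z z' -> P z = P z') ->
  forall y, connect R x y -> P x = P y.
Proof.
move=> H y /connectP[p pth ->].
suff: forall z, connect R x z -> path R z p -> P z = P (last z p).
  by move/(_ x (connect0 R x) pth).
elim: p {pth} => [|a p IH] z cz //= /andP[rza pth].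
rewrite (H z a cz rza); apply: IH pth.
by apply: connect_trans cz (connect1 rza).
Qed.

Lemma not_conn_comp x y z : ~~ connect R x y -> connect R x z -> R z y = false.
Proof.
move=> nxy cxz; apply/negP => r; move/negP: nxy; apply.
by apply: connect_trans cxz (connect1 r).
Qed.

Lemma top_comp x0 (hmax : forall y, #|N y| <= #|N x0|) y z :
  ~~ connect R x0 y -> connect R x0 z -> N y \subset N z.
Proof.
move=> ny cz.
have -> : (N y \subset N z) = (N y \subset N x0).
  apply/esym; apply: (connect_pinv (P := fun z => N y \subset N z)) cz.
  move=> a b ca rab.
  have cb : connect R x0 b by apply: connect_trans ca (connect1 rab).
  have ra := not_conn_comp ny ca; have rb := not_conn_comp ny cb.
  move: ra rb rab; rewrite /incomp.
  case Ha: (N y \subset N a); case Hb: (N y \subset N b) => //=; rewrite ?andbT.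
  - move=> _ /negbFE hb /andP[_ /negP []]; by apply: subset_trans hb _; rewrite Ha.
  - move=> /negbFE ha _ /andP[/negP na _]; case: na; by apply: subset_trans ha _; rewrite Hb.
case: (boolP (N y \subset N x0)) => // h.
have := not_conn_comp ny (connect0 R x0).
rewrite /incomp h /= andbT => /negbFE h0.
have : N x0 \proper N y by rewrite properEneq h0 andbT; apply/eqP => e; rewrite e subxx in h.
by move/proper_card; rewrite ltnNge hmax.
Qed.

Lemma bot_comp x0 (hmin : forall y, #|N x0| <= #|N y|) y z :
  ~~ connect R x0 y -> connect R x0 z -> N z \subset N y.
Proof.
move=> ny cz.
have -> : (N z \subset N y) = (N x0 \subset N y).
  apply/esym; apply: (connect_pinv (P := fun z => N z \subset N y)) cz.
  move=> a b ca rab.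
  have cb : connect R x0 b by apply: connect_trans ca (connect1 rab).
  have ra := not_conn_comp ny ca; have rb := not_conn_comp ny cb.
  move: ra rb rab; rewrite /incomp.
  case Ha: (N a \subset N y); case Hb: (N b \subset N y) => //=; rewrite ?andbT.
  - move=> _ /negbFE hb /andP[/negP na _]; case: na; by apply: subset_trans _ hb; rewrite Ha.
  - move=> /negbFE ha _ /andP[_ /negP []]; by apply: subset_trans _ ha; rewrite Hb.
case: (boolP (N x0 \subset N y)) => // h.
have := not_conn_comp ny (connect0 R x0).
rewrite /incomp h /= => /negbFE h0.
have : N y \proper N x0 by rewrite properEneq h0 andbT; apply/eqP => e; rewrite e subxx in h.
by move/proper_card; rewrite ltnNge hmin.
Qed.

End IncGen.

Section Graph.
Variables (T1 T2 : finType) (E : {set T1 * T2}).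
Definition gN1 (u : T1) : {set T2} := [set w | (u, w) \in E].
Definition gN2 (w : T2) : {set T1} := [set u | (u, w) \in E].
Local Notation R1 := (incomp gN1).
Local Notation R2 := (incomp gN2).

Definition good := [forall u, gN1 u != set0] && [forall w, gN2 w != setT].
Definition cross (A : {set T1}) (B : {set T2}) :=
  [forall u, forall w, ((u \notin A) && (w \in B)) ==> ((u, w) \in E)] &&
  [forall u, forall w, ((u \in A) && (w \notin B)) ==> ((u, w) \notin E)].
Definition subt (A : {set T1}) (B : {set T2}) :=
  [&& 2 <= #|A|, 2 <= #|B|, [forall a in A, forall b in A, connect R1 a b] &
     [forall a in B, forall b in B, connect R2 a b]].
Definition Cond A B := cross A B && subt A B.

Lemma crossP (A : {set T1}) (B : {set T2}) :
  reflect ((forall u w, u \notin A -> w \in B -> (u, w) \in E) /\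
           (forall u w, u \in A -> w \notin B -> (u, w) \notin E)) (cross A B).
Proof.
apply: (iffP andP) => [[/forallP h1 /forallP h2]|[h1 h2]]; split.
- move=> u w uA wB; by move: (forallP (h1 u) w); rewrite uA wB.
- move=> u w uA wB; by move: (forallP (h2 u) w); rewrite uA wB.
- apply/forallP => u; apply/forallP => w; apply/implyP => /andP[]; exact: h1.
- apply/forallP => u; apply/forallP => w; apply/implyP => /andP[]; exact: h2.
Qed.

Lemma in_gN1 u w : (w \in gN1 u) = ((u, w) \in E). Proof. by rewrite inE. Qed.
Lemma in_gN2 u w : (u \in gN2 w) = ((u, w) \in E). Proof. by rewrite inE. Qed.

Section CrossFacts.
Variables (A : {set T1}) (B : {set T2}).
Hypothesis cAB : cross A B.

Lemma cross_in u w : u \notin A -> w \in B -> (u, w) \in E.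
Proof. by case/crossP: cAB => h _; apply: h. Qed.
Lemma cross_out u w : u \in A -> w \notin B -> (u, w) \notin E.
Proof. by case/crossP: cAB => _ h; apply: h. Qed.

Lemma cross_subN2 w w' : w \in B -> w' \notin B -> gN2 w' \subset gN2 w.
Proof.
move=> wB w'B; apply/subsetP => u; rewrite !in_gN2 => uw'.
case uA: (u \in A); first by move: (cross_out uA w'B); rewrite uw'.
by apply: cross_in => //; rewrite uA.
Qed.

Lemma cross_subN1 u u' : u \in A -> u' \notin A -> gN1 u \subset gN1 u'.
Proof.
move=> uA u'A; apply/subsetP => w; rewrite !in_gN1 => uw.
case wB: (w \in B); first by apply: cross_in.
by move: (cross_out uA (negbT wB)); rewrite uw.
Qed.

Lemma closedB : closed R2 B.
Proof.
apply: intro_closed; first by apply: sym_connect_sym; apply: incompC.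
move=> w w' rww' wB; apply/negPn/negP => w'B.
by move: rww'; rewrite /incomp (cross_subN2 wB w'B) andbF.
Qed.

Lemma closedA : closed R1 A.
Proof.
apply: intro_closed; first by apply: sym_connect_sym; apply: incompC.
move=> u u' ruu' uA; apply/negPn/negP => u'A.
by move: ruu'; rewrite /incomp (cross_subN1 uA u'A).
Qed.

Lemma connB w w' : connect R2 w w' -> (w \in B) = (w' \in B).
Proof. move=> c; exact: (closed_connect closedB c). Qed.
Lemma connA u u' : connect R1 u u' -> (u \in A) = (u' \in A).
Proof. move=> c; exact: (closed_connect closedA c). Qed.

End CrossFacts.

Lemma conn_inP (T U : finType) (N : T -> {set U}) (C : {set T}) :
  reflect (forall a b, a \in C -> b \in C -> connect (incomp N) a b)
    [forall a in C, forall b in C, connect (incomp N) a b].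
Proof.
apply: (iffP forall_inP) => [h a b aC bC|h a aC].
  by move/forall_inP: (h a aC); apply.
by apply/forall_inP => b bC; apply: h.
Qed.

Lemma ex_inc (T U : finType) (N : T -> {set U}) (C : {set T}) x :
  1 < #|C| -> x \in C -> (forall a b, a \in C -> b \in C -> connect (incomp N) a b) ->
  exists y, incomp N x y.
Proof.
case/card_gt1P => [a [b [aC bC ab]]] xC hc.
have [y [yC yx]] : exists y, y \in C /\ y != x.
  case: (eqVneq a x) => [ax|ax]; last by exists a.
  by exists b; split => //; rewrite -ax eq_sym.
case/connectP: (hc x y xC yC) => [[|z p] /=]; first by move=> _ e; rewrite e eqxx in yx.
by case/andP => r _ _; exists z.
Qed.

Lemma Cond_good (A : {set T1}) (B : {set T2}) : Cond A B -> good.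
Proof.
case/andP => cAB /and4P[cA cB /conn_inP hA /conn_inP hB].
apply/andP; split; apply/forallP.
- move=> u; case uA: (u \in A).
  + have [u' r] := ex_inc cA uA hA.
    move: r; rewrite /incomp => /andP[/negP h _]; apply/negP => /eqP e; apply: h.
    by rewrite e sub0set.
  + have /card_gt0P [w wB] : 0 < #|B| by apply: ltnW.
    apply/set0Pn; exists w; rewrite in_gN1; apply: (cross_in cAB) wB; by rewrite uA.
- move=> w; case wB: (w \in B).
  + have [w' r] := ex_inc cB wB hB.
    apply/negP => /eqP e; by rewrite /incomp e subsetT andbF in r.
  + have /card_gt0P [u uA] : 0 < #|A| by apply: ltnW.
    apply/negP => /eqP e; have : u \in gN2 w by rewrite e inE.
    by rewrite in_gN2; apply/negP; apply: (cross_out cAB) uA (negbT wB).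
Qed.

Lemma CondB_sub A1 B1 A2 B2 : Cond A1 B1 -> Cond A2 B2 -> B1 \subset B2.
Proof.
case/andP => c1 /and4P[_ cB1 _ /conn_inP hB1].
case/andP => c2 /and4P[_ cB2 _ /conn_inP hB2].
apply/subsetP => w wB1; apply/negPn/negP => wB2.
have [w' r] := ex_inc cB1 wB1 hB1.
have w'B1 : w' \in B1 by rewrite -(connB c1 (connect1 r)).
have w'B2 : w' \notin B2 by rewrite -(connB c2 (connect1 r)).
have /card_gt0P [v vB2] : 0 < #|B2| by apply: ltnW.
have vB1 : v \notin B1.
  apply/negP => vB1; move: (connB c2 (hB1 v w vB1 wB1)); rewrite vB2 => h.
  by rewrite -h in wB2.
have ew : gN2 w = gN2 v.
  by apply/eqP; rewrite eqEsubset (cross_subN2 c2 vB2 wB2) (cross_subN2 c1 wB1 vB1).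
have ew' : gN2 w' = gN2 v.
  by apply/eqP; rewrite eqEsubset (cross_subN2 c2 vB2 w'B2) (cross_subN2 c1 w'B1 vB1).
by rewrite incomp_irr // ew ew' in r.
Qed.

Lemma charA A B u : Cond A B -> (u \in A) = ~~ (B \subset gN1 u).
Proof.
case/andP => c /and4P[cA _ /conn_inP hA _].
case uA: (u \in A).
- have [u' r] := ex_inc cA uA hA.
  have u'A : u' \in A by rewrite -(connA c (connect1 r)).
  apply/esym/negP => sB; move: r; rewrite /incomp => /andP[_ /negP []].
  apply/subsetP => w; rewrite in_gN1 => uw.
  apply: (subsetP sB); case wB: (w \in B) => //.
  by move: (cross_out c u'A (negbT wB)); rewrite uw.
- suff -> : B \subset gN1 u by [].
  apply/subsetP => w wB; rewrite in_gN1.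
  by apply: (cross_in c) wB; rewrite uA.
Qed.

Lemma Cond_unique A1 B1 A2 B2 : Cond A1 B1 -> Cond A2 B2 -> A1 = A2 /\ B1 = B2.
Proof.
move=> h1 h2.
have eB : B1 = B2 by apply/eqP; rewrite eqEsubset (CondB_sub h1 h2) (CondB_sub h2 h1).
split => //; apply/setP => u; by rewrite (charA u h1) (charA u h2) eB.
Qed.

End Graph.

Lemma ex_max (T : finType) (x : T) (F : T -> nat) : exists x0, forall y, F y <= F x0.
Proof.
case: (@arg_maxnP T x predT F isT) => m _ h; exists m => y; exact: h.
Qed.
Lemma ex_min (T : finType) (x : T) (F : T -> nat) : exists x0, forall y, F x0 <= F y.
Proof.
case: (@arg_minnP T x predT F isT) => m _ h; exists m => y; exact: h.
Qed.

Section Exist.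
Variables (T1 T2 : finType) (E : {set T1 * T2}).
Local Notation N1 := (gN1 E).
Local Notation N2 := (gN2 E).
Local Notation R1 := (incomp N1).
Local Notation R2 := (incomp N2).

Lemma symR1 : connect_sym R1.
Proof. apply: sym_connect_sym; apply: incompC. Qed.
Lemma symR2 : connect_sym R2.
Proof. apply: sym_connect_sym; apply: incompC. Qed.

Lemma Cond_exists (u1 : T1) (w1 : T2) : good E -> exists A B, Cond E A B.
Proof.
case/andP => /forallP g1' /forallP g2'.
have g1 : forall u, exists w, (u, w) \in E.
  by move=> u; case/set0Pn: (g1' u) => w; rewrite in_gN1; exists w.
have g2 : forall w, exists u, (u, w) \notin E.
  move=> w; have := g2' w; rewrite -subTset => /subsetPn [u _]; rewrite in_gN2.
  by exists u.
have [w0 hmax] := ex_max w1 (fun w => #|N2 w|).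
have [u0 hmin] := ex_min u1 (fun u => #|N1 u|).
set C2 := [set w | connect R2 w0 w].
set C1 := [set u | connect R1 u0 u].
have ha : forall w w', w \notin C2 -> w' \in C2 -> N2 w \subset N2 w'.
  move=> w w'; rewrite !inE; exact: top_comp.
have hb : forall u u', u \notin C1 -> u' \in C1 -> N1 u' \subset N1 u.
  move=> u u'; rewrite !inE; exact: bot_comp.
have w0C2 : w0 \in C2 by rewrite inE connect0.
have u0C1 : u0 \in C1 by rewrite inE connect0.
set I' := [set u | ~~ (C2 \subset N1 u)].
have hd : forall u w, u \in I' -> (u, w) \in E -> w \in C2.
  move=> u w; rewrite inE => uI uw; apply/negPn/negP => wC2.
  move/negP: uI; apply; apply/subsetP => w' w'C2; rewrite in_gN1.
  by rewrite -in_gN2; apply: (subsetP (ha w w' wC2 w'C2)); rewrite in_gN2.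
have hdN : forall u, u \in I' -> N1 u \subset C2.
  by move=> u uI; apply/subsetP => w; rewrite in_gN1; apply: hd.
have clI : closed R1 I'.
  apply: intro_closed; first exact: symR1.
  move=> u v ruv uI; apply/negPn/negP => vI.
  move: vI; rewrite inE negbK => sv.
  by move: ruv; rewrite /incomp (subset_trans (hdN u uI) sv).
have [uh uhw0] := g2 w0.
have uhI : uh \in I'.
  by rewrite inE; apply/negP => /subsetP /(_ w0 w0C2); rewrite in_gN1 (negbTE uhw0).
have u0I : u0 \in I'.
  apply/negPn/negP => u0I; move: u0I; rewrite inE negbK => s0.
  have pr : N1 uh \proper C2.
    rewrite properEneq hdN // andbT; apply/eqP => e.
    by move: w0C2; rewrite -e in_gN1 (negbTE uhw0).
  have := leq_trans (proper_card pr) (subset_leq_card s0).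
  by rewrite ltnNge hmin.
have C1I : forall u, u \in C1 -> u \in I'.
  move=> u; rewrite inE => c; by rewrite -(closed_connect clI c).
have IC1 : forall u, u \in I' -> u \in C1.
  move=> u uI; apply/negPn/negP => uC1.
  set J := [set w | [exists u', (u' \in C1) && ((u', w) \in E)]].
  have hJx : forall x w, w \in J -> x \notin C1 -> (x, w) \in E.
    move=> x w; rewrite inE => /existsP [u' /andP [u'C1 u'w]] xC1.
    by rewrite -in_gN1; apply: (subsetP (hb x u' xC1 u'C1)); rewrite in_gN1.
  have hJ2 : forall w w', w \in J -> w' \notin J -> N2 w' \subset N2 w.
    move=> w w' wJ w'J; apply/subsetP => x; rewrite !in_gN2 => xw'.
    apply: hJx wJ _; apply/negP => xC1; move/negP: w'J; apply.
    by rewrite inE; apply/existsP; exists x; rewrite xC1.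
  have clJ : closed R2 J.
    apply: intro_closed; first exact: symR2.
    move=> w w' r wJ; apply/negPn/negP => w'J.
    by move: r; rewrite /incomp (hJ2 w w' wJ w'J) andbF.
  have w0J : w0 \in J.
    have [ws u0ws] := g1 u0.
    have wsJ : ws \in J by rewrite inE; apply/existsP; exists u0; rewrite u0C1.
    apply/negPn/negP => w0J.
    have pr : N2 w0 \proper N2 ws.
      rewrite properEneq hJ2 // andbT; apply/eqP => e.
      have : u0 \in N2 ws by rewrite in_gN2.
      rewrite -e in_gN2 => u0w0; move/negP: w0J; apply.
      by rewrite inE; apply/existsP; exists u0; rewrite u0C1.
    by have := proper_card pr; rewrite ltnNge hmax.
  move: uI; rewrite inE => /negP []; apply/subsetP => w; rewrite inE => c.
  rewrite in_gN1; apply: hJx uC1; by rewrite -(closed_connect clJ c).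
have cr : cross E C1 C2.
  apply/crossP; split.
  - move=> u w uC1 wC2; rewrite -in_gN1.
    have : u \notin I' by apply/negP => /IC1; apply/negP.
    by rewrite inE negbK => /subsetP; apply.
  - move=> u w uC1 wC2; apply/negP => uw.
    by move/negP: wC2; apply; apply: hd uw; apply: C1I.
exists C1, C2; rewrite /Cond cr /=; rewrite /subt.
apply/and4P; split.
- have [ws u0ws] := g1 u0.
  have [x xws] := g2 ws.
  suff : 1 < #|C1| by []. apply/card_gt1P; exists u0, x; split => //.
  + apply/negPn/negP => xC1; move/negP: xws; apply.
    by rewrite -in_gN1; apply: (subsetP (hb x u0 xC1 u0C1)); rewrite in_gN1.
  + by apply/negP => /eqP e; rewrite -e u0ws in xws.
- have [wh uhwh] := g1 uh.
  suff : 1 < #|C2| by []. apply/card_gt1P; exists w0, wh; split => //.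
  + by apply: hd uhwh.
  + by apply/negP => /eqP e; rewrite e uhwh in uhw0.
- apply/conn_inP => a b; rewrite !inE => ca cb.
  by apply: connect_trans _ cb; rewrite symR1.
- apply/conn_inP => a b; rewrite !inE => ca cb.
  by apply: connect_trans _ cb; rewrite symR2.
Qed.

End Exist.

Lemma bij_card (X Y : finType) (P : pred X) (Q : pred Y) (f : X -> Y) (g : Y -> X) :
  (forall x, P x -> Q (f x)) -> (forall y, Q y -> P (g y)) ->
  (forall x, P x -> g (f x) = x) -> (forall y, Q y -> f (g y) = y) ->
  #|[set x | P x]| = #|[set y | Q y]|.
Proof.
move=> PQ QP gf fg.
rewrite -(@card_in_imset _ _ f); last first.
  by move=> x y; rewrite !inE => Px Py e; rewrite -(gf x Px) e gf.
congr (#|pred_of_set _|); apply/setP => y; rewrite inE; apply/imsetP/idP.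
  by case=> x; rewrite inE => Px ->; apply: PQ.
by move=> Qy; exists (g y); rewrite ?inE ?fg //; apply: QP.
Qed.

Lemma conn_transfer (K T : finType) (f : K -> T) (A : {set T}) (e : rel T) (e' : rel K) :
  injective f -> (forall a, a \in A -> exists x, f x = a) -> closed e A ->
  (forall x, f x \in A) -> (forall x y, e' x y = e (f x) (f y)) ->
  forall x y, connect e' x y = connect e (f x) (f y).
Proof.
move=> finj fsurj clA fA he x y; apply/idP/idP.
- case/connectP => p pth ->; apply/connectP; exists (map f p); last by rewrite last_map.
  by elim: p x pth => [|z p IH] x //= /andP[r pth]; rewrite -he r IH.
- case/connectP => p; elim: p x => [|a p IH] x /=.
    by move=> _ /finj ->.
  case/andP => r pth lst.
  have aA : a \in A by rewrite -(clA _ _ r) fA.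
  have [z fz] := fsurj a aA; subst a.
  apply: connect_trans (connect1 _) (IH z pth lst); by rewrite he.
Qed.

Lemma connb_transfer (K T : finType) (f : K -> T) (A : {set T}) (e : rel T) (e' : rel K) :
  injective f -> (forall a, a \in A -> exists x, f x = a) -> closed e A ->
  (forall x, f x \in A) -> (forall x y, e' x y = e (f x) (f y)) ->
  connectedb e' = [forall a in A, forall b in A, connect e a b].
Proof.
move=> finj fsurj clA fA he.
have ht := conn_transfer finj fsurj clA fA he.
apply/idP/idP.
- move/forallP => h; apply/forall_inP => a aA; apply/forall_inP => b bA.
  have [x <-] := fsurj a aA; have [y <-] := fsurj b bA.
  by rewrite -ht; move/forallP: (h x); apply.
- move=> h; apply/forallP => x; apply/forallP => y; rewrite ht.
  by move/forall_inP: h => /(_ (f x) (fA x)) /forall_inP; apply.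
Qed.

Section Relabel.
Variables (T1 T2 : finType) (A : {set T1}) (B : {set T2}).
Definition f1 : 'I_#|A| -> T1 := enum_val.
Definition f2 : 'I_#|B| -> T2 := enum_val.

Lemma f1A x : f1 x \in A. Proof. exact: enum_valP. Qed.
Lemma f2B y : f2 y \in B. Proof. exact: enum_valP. Qed.
Lemma f1_inj : injective f1. Proof. exact: enum_val_inj. Qed.
Lemma f2_inj : injective f2. Proof. exact: enum_val_inj. Qed.
Lemma f1_surj a : a \in A -> exists x, f1 x = a.
Proof. by move=> aA; exists (enum_rank_in aA a); rewrite /f1 enum_rankK_in. Qed.
Lemma f2_surj a : a \in B -> exists x, f2 x = a.
Proof. by move=> aB; exists (enum_rank_in aB a); rewrite /f2 enum_rankK_in. Qed.

Definition rl (E : {set T1 * T2}) : {set 'I_#|A| * 'I_#|B|} :=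
  [set p | (f1 p.1, f2 p.2) \in E].

Section Tr.
Variable E : {set T1 * T2}.
Hypothesis cr : cross E A B.

Lemma sub1 x x' : (nbr1 (rl E) x \subset nbr1 (rl E) x') = (gN1 E (f1 x) \subset gN1 E (f1 x')).
Proof.
apply/subsetP/subsetP => h.
- move=> w; rewrite !in_gN1 => xw.
  have wB : w \in B.
    case wB: (w \in B) => //; by move: (cross_out cr (f1A x) (negbT wB)); rewrite xw.
  have [y ey] := f2_surj wB; subst w.
  by have := h y; rewrite /nbr1 /rl !inE /= => hh; apply: hh.
- move=> y; rewrite /nbr1 /rl !inE /= => xy.
  by have := h (f2 y); rewrite !in_gN1; apply.
Qed.

Lemma sub2 y y' : (nbr2 (rl E) y \subset nbr2 (rl E) y') = (gN2 E (f2 y) \subset gN2 E (f2 y')).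
Proof.
apply/subsetP/subsetP => h.
- move=> u; rewrite !in_gN2 => uy.
  case uA: (u \in A); last by apply: (cross_in cr) (f2B y'); rewrite uA.
  have [x ex] := f1_surj uA; subst u.
  by have := h x; rewrite /nbr2 /rl !inE /= => hh; apply: hh.
- move=> x; rewrite /nbr2 /rl !inE /= => xy.
  by have := h (f1 x); rewrite !in_gN2; apply.
Qed.

Lemma tangle_transfer : is_tangle (rl E) = subt E A B.
Proof.
rewrite /is_tangle /subt; congr [&& _, _ & _].
rewrite andbC; congr (_ && _).
- apply: connb_transfer.
  + exact: f1_inj.
  + exact: f1_surj.
  + exact: (closedA cr).
  + exact: f1A.
  + by move=> x y; rewrite /incomp !sub1.
- apply: connb_transfer.
  + exact: f2_inj.
  + exact: f2_surj.
  + exact: (closedB cr).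
  + exact: f2B.
  + by move=> x y; rewrite /incomp !sub2.
Qed.

End Tr.
End Relabel.

Section Count.
Variables (T1 T2 : finType) (A : {set T1}) (B : {set T2}).
Local Notation g1 := (@f1 T1 A).
Local Notation g2 := (@f2 T2 B).
Local Notation Y := ({set 'I_#|A| * 'I_#|B|} * {set T1 * T2})%type.

Definition Phi (E : {set T1 * T2}) : Y := (rl A B E, E :&: setX (~: A) (~: B)).
Definition Psi (y : Y) : {set T1 * T2} :=
  [set p : T1 * T2 | if p.1 \in A then
     (if p.2 \in B then [exists x, exists z, [&& g1 x == p.1, g2 z == p.2 & (x, z) \in y.1]] else false)
   else (if p.2 \in B then true else p \in y.2)].
Definition Qy (y : Y) := is_tangle y.1 && (y.2 \subset setX (~: A) (~: B)).

Lemma rlPsi y : rl A B (Psi y) = y.1.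
Proof.
apply/setP => [[x z]]; rewrite /rl !inE /= f1A f2B.
apply/existsP/idP => [[x' /existsP [z' /and3P[/eqP e1 /eqP e2 h]]]|h].
  by move: h; rewrite (f1_inj e1) (f2_inj e2).
by exists x; apply/existsP; exists z; rewrite !eqxx h.
Qed.

Lemma crossPsi y : cross (Psi y) A B.
Proof.
apply/crossP; split.
- by move=> u w uA wB; rewrite inE /= (negbTE uA) wB.
- by move=> u w uA wB; rewrite inE /= uA (negbTE wB).
Qed.

Lemma count_cond :
  #|[set E : {set T1 * T2} | Cond E A B]| = tau #|A| #|B| * 2 ^ (#|~: A| * #|~: B|).
Proof.
rewrite (@bij_card _ _ (fun E => Cond E A B) Qy Phi Psi).
- have -> : [set y | Qy y] = setX [set E' | is_tangle E'] (powerset (setX (~: A) (~: B))).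
    by apply/setP => [[E1 E2]]; rewrite !inE /= ?powersetE.
  by rewrite cardsX card_powerset cardsX.
- move=> E /andP [cr st]; rewrite /Qy /Phi /= subsetIr andbT.
  by rewrite tangle_transfer.
- move=> y /andP [t _]; rewrite /Cond crossPsi /=.
  by rewrite -tangle_transfer ?crossPsi // rlPsi.
- move=> E /andP [cr _]; apply/setP => [[u w]]; rewrite inE /=.
  case uA: (u \in A); case wB: (w \in B).
  + apply/existsP/idP => [[x /existsP [z /and3P[/eqP e1 /eqP e2]]]|h].
      by rewrite /rl inE /= e1 e2.
    have [x ex] := f1_surj uA; have [z ez] := f2_surj wB.
    by exists x; apply/existsP; exists z; rewrite ex ez !eqxx /rl inE /= ex ez h.
  + by apply/esym/negbTE; apply: (cross_out cr) => //; rewrite wB.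
  + by apply/esym; apply: (cross_in cr) => //; rewrite uA.
  + by rewrite inE in_setX !inE uA wB andbT.
- move=> [E1 E2] /andP [_ s] /=; rewrite /Phi rlPsi /=; congr (_, _).
  apply/setP => [[u w]]; rewrite !inE /=.
  have hs := subsetP s (u, w); rewrite /= in_setX !inE /= in hs.
  case uA: (u \in A); case wB: (w \in B) => //=; rewrite ?andbF ?andbT //.
  - by apply/esym/negP => /hs; rewrite uA wB.
  - by apply/esym/negP => /hs; rewrite uA wB.
  - by apply/esym/negP => /hs; rewrite uA wB.
Qed.

End Count.

Lemma card_sets (T : finType) : #|{set T}| = 2 ^ #|T|.
Proof.
rewrite -cardsT -card_powerset; apply: eq_card => A.
by rewrite !inE ?powersetE ?subsetT.
Qed.

Lemma sum_bool (X : finType) (P : pred X) : \sum_(x : X) (P x : nat) = #|[set x | P x]|.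
Proof.
rewrite -sum1_card [RHS]big_mkcond /=; apply: eq_bigr => x _; rewrite inE; by case: (P x).
Qed.

Lemma sum_card (T : finType) (F : nat -> nat) :
  \sum_(A : {set T}) F #|A| = \sum_(k < #|T|.+1) 'C(#|T|, k) * F k.
Proof.
have -> : \sum_(k < #|T|.+1) 'C(#|T|, k) * F k =
          \sum_(k < #|T|.+1) \sum_(A : {set T}) ((#|A| == k) * F k).
  apply: eq_bigr => k _; rewrite -card_draws -big_distrl /=; congr (_ * _).
  by rewrite -sum_bool.
rewrite exchange_big /=; apply: eq_bigr => A _.
have H : #|A| < #|T|.+1 by rewrite ltnS max_card.
rewrite (bigD1 (Ordinal H)) //= eqxx mul1n big1 ?addn0 // => k.
by rewrite -val_eqE /= eq_sym => /negbTE ->.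
Qed.

Lemma ffun_count (T1 T2 : finType) (S0 : {set T2}) :
  #|[set F : {ffun T1 -> {set T2}} | [forall u, F u != S0]]| = (2 ^ #|T2| - 1) ^ #|T1|.
Proof.
rewrite -card_sets subn1 -(cardsC1 S0) -card_ffun_on.
apply: eq_card => F; rewrite inE; apply/forallP/ffun_onP => h x.
  by rewrite in_setC1 h.
by move: (h x); rewrite in_setC1.
Qed.

Lemma row_count (T1 T2 : finType) (S0 : {set T2}) :
  #|[set E : {set T1 * T2} | [forall u, gN1 E u != S0]]| = (2 ^ #|T2| - 1) ^ #|T1|.
Proof.
rewrite (@bij_card _ _ _ (fun F : {ffun T1 -> {set T2}} => [forall u, F u != S0])
   (fun E => [ffun u => gN1 E u]) (fun F => [set p : T1 * T2 | p.2 \in F p.1])).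
- exact: ffun_count.
- by move=> E /forallP h; apply/forallP => u; rewrite ffunE.
- move=> F /forallP h; apply/forallP => u; move: (h u); congr (~~ (_ == _)).
  by apply/setP => w; rewrite in_gN1 inE.
- by move=> E _; apply/setP => [[u w]]; rewrite inE ffunE in_gN1.
- by move=> F _; apply/ffunP => u; rewrite ffunE; apply/setP => w; rewrite in_gN1 inE.
Qed.

Lemma col_count (T1 T2 : finType) (S0 : {set T1}) :
  #|[set E : {set T1 * T2} | [forall w, gN2 E w != S0]]| = (2 ^ #|T1| - 1) ^ #|T2|.
Proof.
rewrite -(row_count T2 S0).
apply: (@bij_card _ _ _ _ (fun E : {set T1 * T2} => [set p : T2 * T1 | (p.2, p.1) \in E])
                         (fun E : {set T2 * T1} => [set p : T1 * T2 | (p.2, p.1) \in E])).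
- move=> E /forallP h; apply/forallP => w; move: (h w); congr (~~ (_ == _)).
  by apply/setP => u; rewrite in_gN1 in_gN2 inE.
- move=> E /forallP h; apply/forallP => w; move: (h w); congr (~~ (_ == _)).
  by apply/setP => u; rewrite in_gN1 in_gN2 inE.
- by move=> E _; apply/setP => [[u w]]; rewrite !inE.
- by move=> E _; apply/setP => [[u w]]; rewrite !inE.
Qed.

Section Good.
Variables (T1 T2 : finType).

Lemma Cond_card (E : {set T1 * T2}) A B : Cond E A B -> 1 < #|A|.
Proof. by case/andP => _ /and4P[]. Qed.

Lemma sum_Cond_E (E : {set T1 * T2}) :
  ~~ ((#|T1| == 0) && (#|T2| == 0)) ->
  \sum_(A : {set T1}) \sum_(B : {set T2}) (Cond E A B : nat) = good E.
Proof.
move=> nd.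
case gE: (good E); last first.
  rewrite big1 // => A _; rewrite big1 // => B _.
  by case cE: (Cond E A B) => //; move: (Cond_good cE); rewrite gE.
have [g1 g2] : (forall u : T1, exists w : T2, (u, w) \in E) /\
               (forall w : T2, exists u : T1, (u, w) \notin E).
  case/andP: gE => /forallP g1' /forallP g2'; split.
    by move=> u; case/set0Pn: (g1' u) => w; rewrite in_gN1; exists w.
  move=> w; have := g2' w; rewrite -subTset => /subsetPn [u _]; rewrite in_gN2.
  by exists u.
have [u1 [w1 _]] : exists (u1 : T1) (w1 : T2), True.
  case: (pickP (@predT T1)) => [u1 _ | h1].
    by have [w1 _] := g1 u1; exists u1, w1.
  have c1 : #|T1| = 0 by apply: eq_card0 => x; have := h1 x.
  move: nd; rewrite c1 /= -lt0n => /card_gt0P [w1 _].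
  by have [u1 _] := g2 w1; exists u1, w1.
have [A0 [B0 c0]] := Cond_exists u1 w1 gE.
rewrite (bigD1 A0) //= (bigD1 B0) //= c0 big1 ?addn0.
  rewrite big1 ?addn0 // => A nA; rewrite big1 // => B _.
  case cE: (Cond E A B) => //; have [eA _] := Cond_unique cE c0.
  by rewrite eA eqxx in nA.
move=> B nB; case cE: (Cond E A0 B) => //; have [_ eB] := Cond_unique cE c0.
by rewrite eB eqxx in nB.
Qed.

Lemma good_sum :
  #|[set E : {set T1 * T2} | good E]| =
  \sum_(A : {set T1}) \sum_(B : {set T2}) #|[set E : {set T1 * T2} | Cond E A B]|
  + ((#|T1| == 0) && (#|T2| == 0)).
Proof.
case: (boolP ((#|T1| == 0) && (#|T2| == 0))) => [/andP[/eqP h1 /eqP h2] | nd].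
- rewrite big1; last first.
    move=> A _; rewrite big1 // => B _; apply: eq_card0 => E; rewrite inE.
    apply/negP => /Cond_card; by rewrite ltnNge (leq_trans (max_card _)) // h1.
  have nu : forall u : T1, False by move=> u; apply: (fintype0 u).
  rewrite add0n /=.
  have -> : #|[set E : {set T1 * T2} | good E]| = #|{set T1 * T2}|.
    apply: eq_card => E; rewrite !inE; apply/andP; split; apply/forallP.
      by move=> u; case: (nu u).
    move=> w; have := fintype0 w; by rewrite h2.
  by rewrite card_sets card_prod h1.
- rewrite addn0 -sum_bool.
  rewrite (eq_bigr (fun E => \sum_(A : {set T1}) \sum_(B : {set T2}) (Cond E A B : nat))); last first.
    by move=> E _; rewrite sum_Cond_E.
  rewrite exchange_big /=; apply: eq_bigr => A _.
  rewrite exchange_big /=; apply: eq_bigr => B _.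
  by rewrite sum_bool.
Qed.

Lemma main_nat :
  \sum_(A : {set T1}) \sum_(B : {set T2}) tau #|A| #|B| * 2 ^ (#|~: A| * #|~: B|)
  + 2 ^ (#|T1| * #|T2|) + ((#|T1| == 0) && (#|T2| == 0))
  = (2 ^ #|T2| - 1) ^ #|T1| + (2 ^ #|T1| - 1) ^ #|T2|.
Proof.
rewrite -(row_count T1 set0) -(col_count T2 setT).
set S1 := [set E : {set T1 * T2} | _].
set S2 := [set E : {set T1 * T2} | _].
rewrite -cardsUI.
have -> : S1 :|: S2 = setT.
  apply/setP => E; rewrite !inE; apply/idP; apply/negPn/negP => /norP[/forallPn[u /negPn /eqP hu]
                                               /forallPn[w /negPn /eqP hw]].
  have : u \in gN2 E w by rewrite hw inE.
  by rewrite in_gN2 -in_gN1 hu inE.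
have -> : S1 :&: S2 = [set E | good E].
  by apply/setP => E; rewrite !inE.
rewrite good_sum cardsT card_sets card_prod.
rewrite (eq_bigr (fun A => \sum_(B : {set T2}) #|[set E : {set T1 * T2} | Cond E A B]|)).
  by rewrite addnA [X in X + _ = _]addnC.
by move=> A _; apply: eq_bigr => B _; rewrite count_cond.
Qed.

End Good.

Local Open Scope ring_scope.

Lemma fact_neq0 n : (n`!)%:R != 0 :> rat.
Proof. by rewrite pnatr_eq0 -lt0n fact_gt0. Qed.

Lemma sum_last (G : nat -> rat) i :
  (forall a, (a < i)%N -> G a = 0) -> \sum_(a < i.+1) G a = G i.
Proof. move=> h; rewrite big_ord_recr /= big1 ?add0r // => a _; apply: h; exact: ltn_ord. Qed.

Lemma B00 : B_lbl 0 0 = 1.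
Proof. by rewrite /B_lbl /= divr1. Qed.

Lemma smul_split F i j :
  smul B_lbl F i j = F i j + \sum_(a < i.+1) \sum_(b < j.+1)
     (if (a == 0%N :> nat) && (b == 0%N :> nat) then 0 else B_lbl a b * F (i - a)%N (j - b)%N).
Proof.
rewrite /smul (big_ord_recl i) (big_ord_recl j) /=.
rewrite [in RHS](big_ord_recl i) [in RHS](big_ord_recl j) /= add0r B00 mul1r !subn0.
by rewrite addrA.
Qed.

Lemma inv_unique S S' :
  (forall i j, smul B_lbl S i j = sone i j) -> (forall i j, smul B_lbl S' i j = sone i j) ->
  forall i j, S i j = S' i j.
Proof.
move=> hS hS'.
suff: forall n i j, (i + j < n)%N -> S i j = S' i j.
  by move=> h i j; apply: (h (i + j).+1).
elim=> [//|n IH] i j hij.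
have := hS i j; rewrite -(hS' i j) !smul_split.
set r1 := \sum_(a < _) _; set r2 := \sum_(a < _) _.
suff -> : r1 = r2 by move/addIr.
apply: eq_bigr => a _; apply: eq_bigr => b _.
case: ifP => // /nandP h; congr (_ * _); apply: IH.
have ha := ltn_ord a; have hb := ltn_ord b.
case: h => /negP h; lia.
Qed.

Lemma binr i a : (a <= i)%N ->
  ('C(i, a))%:R = (i`!)%:R / ((a`!)%:R * ((i - a)`!)%:R) :> rat.
Proof.
move=> h; have hC : ('C(i, a))%:R * ((a`!)%:R * ((i - a)`!)%:R) = (i`!)%:R :> rat.
  by rewrite -!natrM bin_fact.
rewrite -hC; field; apply/andP; split; exact: fact_neq0.
Qed.

Lemma Bnat a b : B_lbl a b = 2 ^+ (a * b) / ((a`!)%:R * (b`!)%:R).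
Proof. by rewrite /B_lbl natrX natrM. Qed.

Lemma smul_ex i j :
  smul B_lbl exp_negx i j = ((2 ^+ j - 1) ^+ i) / ((i`!)%:R * (j`!)%:R).
Proof.
rewrite /smul (eq_bigr (fun a : 'I_i.+1 => B_lbl a j * exp_negx (i - a)%N 0%N)); last first.
  move=> a _; rewrite (@sum_last (fun b => B_lbl a b * exp_negx (i - a)%N (j - b)%N)) ?subnn //.
  move=> b hb; rewrite /exp_negx; have -> : (j - b == 0)%N = false by apply/negbTE; lia.
  by rewrite mulr0.
rewrite addrC exprDn mulr_suml; apply: eq_bigr => a _.
have ha : (a <= i)%N by rewrite -ltnS ltn_ord.
rewrite /exp_negx /= Bnat -[_ *+ 'C(i, a)]mulr_natr binr // -exprM mulnC exprM.
field; rewrite ?fact_neq0 //.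
Qed.

Lemma smul_ey i j :
  smul B_lbl exp_negy i j = ((2 ^+ i - 1) ^+ j) / ((i`!)%:R * (j`!)%:R).
Proof.
rewrite /smul (@sum_last (fun a => \sum_(b < j.+1) B_lbl a b * exp_negy (i - a)%N (j - b)%N)); last first.
  move=> a ha; rewrite big1 // => b _; rewrite /exp_negy.
  have -> : (i - a == 0)%N = false by apply/negbTE; lia.
  by rewrite mulr0.
rewrite subnn addrC exprDn mulr_suml; apply: eq_bigr => b _.
have hb : (b <= j)%N by rewrite -ltnS ltn_ord.
rewrite /exp_negy /= Bnat -[_ *+ 'C(j, b)]mulr_natr binr // -exprM.
field; rewrite ?fact_neq0 //.
Qed.

Lemma smul_sone i j : smul B_lbl sone i j = B_lbl i j.
Proof.
rewrite /smul (@sum_last (fun a => \sum_(b < j.+1) B_lbl a b * sone (i - a)%N (j - b)%N)); last first.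
  move=> a ha; rewrite big1 // => b _; rewrite /sone.
  have -> : (i - a == 0)%N = false by apply/negbTE; lia.
  by rewrite mulr0.
rewrite (@sum_last (fun b => B_lbl i b * sone (i - i)%N (j - b)%N)); last first.
  move=> b hb; rewrite /sone.
  have -> : (j - b == 0)%N = false by apply/negbTE; lia.
  by rewrite andbF mulr0.
by rewrite !subnn /sone /= mulr1.
Qed.

Lemma smul_T i j :
  smul B_lbl T_lbl i j =
  (\sum_(k < i.+1) \sum_(l < j.+1) ('C(i, k) * 'C(j, l) * (tau k l * 2 ^ ((i - k) * (j - l)))))%N%:R
  / ((i`!)%:R * (j`!)%:R).
Proof.
rewrite natr_sum mulr_suml /smul (reindex_inj rev_ord_inj) /=.
apply: eq_bigr => k _.
rewrite natr_sum mulr_suml (reindex_inj rev_ord_inj) /=.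
apply: eq_bigr => l _.
have hk : (k <= i)%N by rewrite -ltnS ltn_ord.
have hl : (l <= j)%N by rewrite -ltnS ltn_ord.
rewrite !subSS !subKn //.
rewrite !natrM natrX binr // binr // Bnat /T_lbl natrM.
field; rewrite ?fact_neq0 //.
Qed.

Lemma cardC_ord n (A : {set 'I_n}) : #|~: A| = (n - #|A|)%N.
Proof. by rewrite [LHS]cardsCs setCK card_ord. Qed.

Lemma sum_sets i j :
  (\sum_(A : {set 'I_i}) \sum_(B : {set 'I_j}) tau #|A| #|B| * 2 ^ (#|~: A| * #|~: B|))%N =
  (\sum_(k < i.+1) \sum_(l < j.+1) ('C(i, k) * 'C(j, l) * (tau k l * 2 ^ ((i - k) * (j - l)))))%N.
Proof.
rewrite (eq_bigr (fun A : {set 'I_i} => \sum_(l < j.+1) 'C(j, l) * (tau #|A| l * 2 ^ ((i - #|A|) * (j - l)))))%N; last first.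
  move=> A _; rewrite (eq_bigr (fun B : {set 'I_j} => tau #|A| #|B| * 2 ^ ((i - #|A|) * (j - #|B|))))%N; last first.
    by move=> B _; rewrite !cardC_ord.
  rewrite (sum_card _ (fun l => tau #|A| l * 2 ^ ((i - #|A|) * (j - l))))%N.
  by rewrite card_ord.
rewrite (sum_card _ (fun k => \sum_(l < j.+1) 'C(j, l) * (tau k l * 2 ^ ((i - k) * (j - l)))))%N card_ord.
apply: eq_bigr => k _; rewrite big_distrr /=; apply: eq_bigr => l _.
by rewrite mulnA.
Qed.


Lemma main_identity i j :
  smul B_lbl (fun a b => exp_negx a b + exp_negy a b - sone a b - T_lbl a b) i j = sone i j.
Proof.
have hnat := main_nat 'I_i 'I_j.
rewrite !card_ord sum_sets in hnat.
have hr := congr1 (fun n : nat => n%:R : rat) hnat; rewrite /= !natrD !natrX in hr.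
rewrite !natrB ?expn_gt0 // in hr.
rewrite /smul.
rewrite (eq_bigr (fun a : 'I_i.+1 => \sum_(b < j.+1) (B_lbl a b * exp_negx (i - a)%N (j - b)%N
   + B_lbl a b * exp_negy (i - a)%N (j - b)%N - B_lbl a b * sone (i - a)%N (j - b)%N
   - B_lbl a b * T_lbl (i - a)%N (j - b)%N))); last first.
  by move=> a _; apply: eq_bigr => b _; rewrite !mulrBr mulrDr.
rewrite (eq_bigr (fun a : 'I_i.+1 => \sum_(b < j.+1) B_lbl a b * exp_negx (i - a)%N (j - b)%N
   + \sum_(b < j.+1) B_lbl a b * exp_negy (i - a)%N (j - b)%N
   - \sum_(b < j.+1) B_lbl a b * sone (i - a)%N (j - b)%N
   - \sum_(b < j.+1) B_lbl a b * T_lbl (i - a)%N (j - b)%N)); last first.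
  by move=> a _; rewrite !sumrB big_split.
rewrite !sumrB big_split /=.
rewrite -/(smul B_lbl exp_negx i j) -/(smul B_lbl exp_negy i j).
rewrite -/(smul B_lbl sone i j) -/(smul B_lbl T_lbl i j).
rewrite smul_ex smul_ey smul_sone smul_T Bnat.
rewrite !natrX in hr.
set S := (\sum_(k < i.+1) _)%N%:R in hr *.
set D := ((i`!)%:R * (j`!)%:R : rat).
have e : forall x y z s : rat, x / D + y / D - z / D - s / D = (x + y - z - s) / D.
  by move=> *; rewrite !mulrBl mulrDl.
rewrite e -hr.
have -> : S + 2 ^+ (i * j) + ((i == 0%N) && (j == 0%N))%:R - 2 ^+ (i * j) - S
          = ((i == 0%N) && (j == 0%N))%:R by ring.
rewrite /D /sone; case: i {hnat hr S D e} => [|i]; case: j => [|j] //=; rewrite ?mul0r //.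
Qed.


Theorem theorem4p3 :
  (exists S : series, forall i j, smul B_lbl S i j = sone i j) /\
  (forall S : series, (forall i j, smul B_lbl S i j = sone i j) ->
     forall i j, T_lbl i j = exp_negx i j + exp_negy i j - sone i j - S i j).
Proof.
pose S0 : series := fun a b => exp_negx a b + exp_negy a b - sone a b - T_lbl a b.
have h0 : forall i j, smul B_lbl S0 i j = sone i j by move=> i j; exact: main_identity.
split; first by exists S0.
move=> S hS i j; rewrite -(inv_unique h0 hS i j) /S0.
ring.
Qed.
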